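(* Let $F_1,\ldots,F_p$ be continuous univariate cumulative distribution functions and let $g:[0,1]^p\to\mathbb R$. If the map $\mathbf x\mapsto g(F_1(x_1),\ldots,F_p(x_p))$ is continuous on $[-\infty,\infty]^p$, then $g$ is continuous on $[0,1]^p$.
   Context: Cumulative distribution functions are extended to $[-\infty,\infty]$ by $F_j(-\infty)=0$, $F_j(+\infty)=1$. *)

(* Defs.v *)
From HB Require Import structures.
From mathcomp Require Import all_boot all_order all_algebra.
From mathcomp Require Import all_classical all_reals all_analysis.
Set Implicit Arguments. Unset Strict Implicit. Unset Printing Implicit Defensive.
Import Order.TTheory GRing.Theory Num.Theory numFieldNormedType.Exports.
Local Open Scope classical_set_scope.
Local Open Scope ring_scope.

Definition is_cdf (R : realType) (F : R -> R) : Prop :=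
  [/\ {homo F : x y / x <= y},
      (forall x : R, F y @[y --> x^'+] --> F x),
      F x @[x --> -oo] --> (0 : R) &
      F x @[x --> +oo] --> (1 : R)].

Definition is_continuous_cdf (R : realType) (F : R -> R) : Prop :=
  is_cdf F /\ continuous F.

Definition cdf_ext (R : realType) (F : R -> R) (x : \bar R) : R :=
  match x with
  | EFin r => F r
  | +oo%E => 1
  | -oo%E => 0
  end.

(* Main.v *)
Require Import Defs.
From HB Require Import structures.
From mathcomp Require Import all_boot all_order all_algebra.
From mathcomp Require Import all_classical all_reals all_analysis.
Import Order.TTheory GRing.Theory Num.Theory numFieldNormedType.Exports.
Local Open Scope classical_set_scope.
Local Open Scope ring_scope.

Lemma ereal_nbhsP (R : realType) (x : \bar R) (A : set (\bar R)) :
  nbhs x A <-> exists2 e : R, 0 < e & forall y, `|contract x - contract y| < e -> A y.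
Proof.
rewrite ereal_nbhsE; split.
  move=> [E [e e0 eE] xA]; exists e => // y xy; apply: xA; apply/xsectionP; exact: eE.
move=> [e e0 H]; exists [set xy | ereal_ball xy.1 e xy.2]; first by exists e.
by move=> y /xsectionP; exact: H.
Qed.

Lemma ereal_compactT (R : realType) : compact [set: \bar R].
Proof.
move=> F FF _.
have cF : ProperFilter (@contract R @ F) by exact: fmap_proper_filter.
have [|c [c1 cc]] := @segment_compact R (-1) 1 (@contract R @ F).
  apply: (@filterS _ F _ setT); last exact: filterT.
  move=> y _ /=; rewrite in_itv /= -ler_norml; exact: contract_le1.
exists (expand c); split => //.
have ce : contract (expand c) = c.
  apply: expandK; rewrite inE /= ler_norml; by move: c1; rewrite /= in_itv.
move=> A B FA /ereal_nbhsP [e e0 eB].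
have : (@contract R @ F) (@contract R @` A).
  by apply: (@filterS _ F _ A) => // y Ay; exists y.
move=> /cc; case/(_ (ball c e)); first exact: nbhsx_ballx.
move=> r [[a Aa <-] cr]; exists a; split => //; apply: eB; rewrite ce; exact: cr.
Qed.

Lemma cdf_ext_continuous (R : realType) (F : R -> R) :
  is_continuous_cdf F -> continuous (cdf_ext F).
Proof.
move=> [[_ _ F0 F1] Fc] [r| |] /=.
- move=> B /= hB; rewrite nbhs_simpl /=; apply/nbhs_EFin.
  exact: (Fc r B hB).
- move=> B /= hB; rewrite nbhs_simpl /=; apply/nbhs_ereal_pinfty; split.
    exact: nbhs_singleton hB.
  exact: F1 B hB.
- move=> B /= hB; rewrite nbhs_simpl /=; apply/nbhs_ereal_ninfty; split.
    exact: nbhs_singleton hB.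
  exact: F0 B hB.
Qed.

Lemma ptws_continuous (X : topologicalType) (p : nat) (R : realType)
  (G : X -> {ptws 'I_p -> R}) :
  (forall j, continuous (fun x => G x j)) -> continuous G.
Proof.
move=> hG x; apply/cvg_sup => j A /= hA.
move: hA; rewrite {1}nbhsE /= => -[B [Bop BGx] BA].
case: Bop => C Cop CB.
rewrite nbhs_simpl /=.
exists ((G^~ j) @^-1` C).
  split; last by move: BGx; rewrite -CB.
  apply: open_comp => // y _; exact: hG.
move=> y /= Cy; apply: BA; rewrite -CB; exact: Cy.
Qed.

Lemma Phi_continuous (R : realType) (p : nat) (F : 'I_p -> R -> R)
  (hF : forall j, is_continuous_cdf (F j)) :
  continuous (fun x : {ptws 'I_p -> \bar R} =>
             ((fun j => cdf_ext (F j) (x j)) : {ptws 'I_p -> R})).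
Proof.
apply: ptws_continuous => j x.
have := continuous_comp (@proj_continuous 'I_p (fun=> \bar R) j x)
  (@cdf_ext_continuous R (F j) (hF j) (x j)).
exact.
Qed.


Lemma cdf_ext_surj (R : realType) (F : R -> R) (t : R) :
  is_continuous_cdf F -> 0 <= t <= 1 -> exists y, cdf_ext F y = t.
Proof.
move=> [[Fh _ F0 F1] Fc] /andP[t0 t1].
have [->|tn0] := eqVneq t 0; first by exists -oo%E.
have [->|tn1] := eqVneq t 1; first by exists +oo%E.
have t0' : 0 < t by rewrite lt_neqAle eq_sym tn0.
have t1' : t < 1 by rewrite lt_neqAle tn1.
have [a Fa] : exists a, F a < t.
  have H : \forall x \near (ninfty_nbhs R), F x < t by exact: (cvgr_lt _ F0 _ t0').
  have [a Ha] := filter_ex H; by exists a.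
have [b Fb] : exists b, t < F b.
  have H : \forall x \near (pinfty_nbhs R), t < F x by exact: (cvgr_gt _ F1 _ t1').
  have [b0 Hb] := filter_ex H; by exists b0.
have ab : a <= b.
  rewrite leNgt; apply/negP => ba.
  have := Fh _ _ (ltW ba); rewrite leNgt => /negP; apply.
  exact: lt_trans Fb.
have Fab : F a <= F b by exact: Fh.
have Fc' : {within `[a, b], continuous F} := continuous_subspaceT Fc.
have mm : Num.min (F a) (F b) <= t <= Num.max (F a) (F b).
  by rewrite (min_l Fab) (max_r Fab) ltW //= ltW.
have [c _ Fct] := IVT ab Fc' mm.
by exists c%:E.
Qed.

Theorem lemma4p1 (R : realType) (p : nat) (F : 'I_p -> R -> R)
  (hF : forall j, is_continuous_cdf (F j))
  (g : {ptws 'I_p -> R} -> R)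
  (hcont : continuous (fun x : {ptws 'I_p -> \bar R} =>
             g ((fun j => cdf_ext (F j) (x j)) : {ptws 'I_p -> R}))) :
  {within [set u : {ptws 'I_p -> R} | forall j, 0 <= u j <= 1], continuous g}.
Proof.
set D := [set u : {ptws 'I_p -> R} | forall j, 0 <= u j <= 1].
set Phi := (fun x : {ptws 'I_p -> \bar R} =>
             ((fun j => cdf_ext (F j) (x j)) : {ptws 'I_p -> R})).
have Phic : continuous Phi := @Phi_continuous R p F hF.
have surj : forall v, D v -> exists x, Phi x = v.
  move=> v Dv.
  have : forall j, exists y, cdf_ext (F j) y = v j.
    by move=> j; exact: (@cdf_ext_surj R (F j) (v j) (hF j) (Dv j)).
  case/choice => x hx; exists x; apply: functional_extensionality_dep => j.
  exact: hx.
apply/subspace_continuousP => u Du.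
apply/cvgrPdist_lt => e e0.
set C := ~` ((fun x => g (Phi x)) @^-1` ball (g u) e).
have Ccl : closed C.
  rewrite closedC; apply: open_comp; last exact: ball_open.
  by move=> x _; exact: hcont.
have Tc : compact [set: {ptws 'I_p -> \bar R}].
  have := tychonoff (fun j : 'I_p => @ereal_compactT R).
  by congr compact; apply/seteqP; split.
have Cc : compact C := subclosed_compact Ccl Tc (@subsetT _ C).
have Kc : compact (Phi @` C) := continuous_compact (continuous_subspaceT Phic) Cc.
have Kcl : closed (Phi @` C).
  apply: compact_closed => //; apply: hausdorff_product => _; exact: Rhausdorff.
have uK : ~ (Phi @` C) u.
  case=> x Cx Phixu; apply: Cx; rewrite /= Phixu; exact: ballxx.
have nK : nbhs u (~` (Phi @` C)).
  by apply: open_nbhs_nbhs; split => //; rewrite openC.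
rewrite near_withinE; apply: filterS nK => v nKv Dv.
have [x Phixv] := surj v Dv.
have [//|h] := ltP (`|g u - g v|) e.
exfalso; apply: nKv; exists x => //.
rewrite /C /= /ball /= Phixv ltNge h //.
Qed.
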